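(* For every $n\geq1$, $$\sum_{\sigma\in\mathfrak S_{n+1}}(-1)^{{\rm des}(\sigma)}\Bigl(\frac{\beta}{2}\Bigr)^{{\rm LRmin}(\sigma)+{\rm RLmin}(\sigma)-2}=\begin{cases}(-1)^{\frac n2}\displaystyle\sum_{\sigma\in\mathfrak S^{d}_n}\beta^{{\rm RLmin}(\sigma)},& n\text{ even},\\ 0,& n\text{ odd},\end{cases}$$ where $\mathfrak S^d_n$ is the set of down-up permutations of $[n]$.
   Context: For $\sigma=\sigma_1\cdots\sigma_m\in\mathfrak S_m$: ${\rm des}(\sigma)$ is the number of $i\in[m-1]$ with $\sigma_i>\sigma_{i+1}$; ${\rm LRmin}(\sigma)$ is the number of $i$ with $\sigma_j>\sigma_i$ for all $j<i$; ${\rm RLmin}(\sigma)$ is the number of $i$ with $\sigma_j>\sigma_i$ for all $j>i$. A permutation is down-up if $\sigma_1>\sigma_2<\sigma_3>\sigma_4<\cdots$. *)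

(* Defs.v *)
From mathcomp Require Import all_boot all_order all_algebra all_fingroup.
Set Implicit Arguments. Unset Strict Implicit. Unset Printing Implicit Defensive.

(* One-line notation sigma_1 ... sigma_m of a permutation of 'I_m
   (values shifted by -1, irrelevant for all comparisons below). *)
Definition pword m (s : 'S_m) : seq nat := [seq val (s i) | i <- enum 'I_m].

(* positions are 0-based here: position i corresponds to i+1 in the paper *)
Definition des_seq (l : seq nat) : nat :=
  count (fun i => nth 0 l i.+1 < nth 0 l i) (iota 0 (size l).-1).

Definition lrmin_seq (l : seq nat) : nat :=
  count (fun i => all (fun j => nth 0 l i < nth 0 l j) (iota 0 i))
        (iota 0 (size l)).

Definition rlmin_seq (l : seq nat) : nat :=
  count (fun i => all (fun j => nth 0 l i < nth 0 l j)
                      (iota i.+1 (size l - i.+1)))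
        (iota 0 (size l)).

(* down-up: sigma_1 > sigma_2 < sigma_3 > ... ; 0-based position i even
   means a descent at (i, i+1), odd means an ascent. *)
Definition downup_seq (l : seq nat) : bool :=
  all (fun i => if odd i then nth 0 l i < nth 0 l i.+1
                else nth 0 l i.+1 < nth 0 l i)
      (iota 0 (size l).-1).

Definition des m (s : 'S_m) := des_seq (pword s).
Definition LRmin m (s : 'S_m) := lrmin_seq (pword s).
Definition RLmin m (s : 'S_m) := rlmin_seq (pword s).
Definition downup m (s : 'S_m) := downup_seq (pword s).

(* Main.v *)
Require Import Defs.
From mathcomp Require Import all_boot all_order all_algebra all_fingroup.
From mathcomp Require Import zify ring.
Import GRing.Theory Num.Theory.

Module Aux.
Set Implicit Arguments. Unset Strict Implicit. Unset Printing Implicit Defensive.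

Lemma iota1S n : iota 1 n = map S (iota 0 n).
Proof. by rewrite -[1]addn0 iotaDl. Qed.

Lemma des_cons y l : des_seq (y :: l) = ((head y l < y) + des_seq l)%N.
Proof.
rewrite /des_seq /=; case: l => [|z l] /=; first by rewrite ltnn.
by rewrite iota1S count_map.
Qed.

Lemma all_nth_iota (P : pred nat) l :
  all (fun j => P (nth 0 l j)) (iota 0 (size l)) = all P l.
Proof. by rewrite -[l in RHS](mkseq_nth 0) /mkseq all_map. Qed.

Lemma iotaS1 m n : iota m.+1 n = map S (iota m n).
Proof. by rewrite -addn1 addnC iotaDl. Qed.

Lemma rlmin_cons y l : rlmin_seq (y :: l) = (rlmin_seq l + all (fun z => y < z) l)%N.
Proof.
rewrite /rlmin_seq /= [iota 1 (size l)]iota1S count_map subn1 /= addnC; congr (_ + _)%N.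
  apply: eq_count => i /=; rewrite subSS iotaS1 all_map; exact: eq_all.
by rewrite iota1S all_map -(all_nth_iota (fun z => y < z)).
Qed.

Lemma lrmin_rcons l z : lrmin_seq (rcons l z) = (lrmin_seq l + all (fun y => z < y) l)%N.
Proof.
rewrite /lrmin_seq size_rcons -addn1 iotaD count_cat add0n /= addn0; congr (_ + _)%N.
  apply: eq_in_count => i; rewrite mem_iota /= add0n => ilt /=.
  rewrite nth_rcons ilt; apply: eq_in_all => j; rewrite mem_iota /= add0n => jlt.
  by rewrite nth_rcons (ltn_trans jlt ilt).
rewrite nth_rcons ltnn eqxx -(all_nth_iota (fun y => z < y)).
congr (nat_of_bool _); apply: eq_in_all => j; rewrite mem_iota /= add0n => jlt /=; by rewrite nth_rcons jlt.
Qed.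

Lemma rlmin_cat x a b : all (fun z => x < z) a -> all (fun z => x < z) b ->
  rlmin_seq (a ++ x :: b) = (rlmin_seq b).+1.
Proof.
move=> ha hb; elim: a ha => [|y a IH] /=; first by rewrite rlmin_cons hb addn1.
case/andP=> xy ha; rewrite rlmin_cons IH // all_cat /= ltnNge (ltnW xy) /=.
by rewrite andbF addn0.
Qed.

Lemma lrmin_cat x a b : all (fun z => x < z) a -> all (fun z => x < z) b ->
  lrmin_seq (a ++ x :: b) = (lrmin_seq a).+1.
Proof.
move=> ha; elim/last_ind: b => [|b z IH]; first by rewrite cats1 lrmin_rcons ha addn1.
rewrite all_rcons => /andP[xz hb].
rewrite -rcons_cons -rcons_cat lrmin_rcons IH // all_cat /= ltnNge (ltnW xz) /=.
by rewrite andbF addn0.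
Qed.

Lemma des_cat x a b : all (fun z => x < z) a -> all (fun z => x < z) b ->
  des_seq (a ++ x :: b) = (des_seq a + des_seq b + (a != [::]))%N.
Proof.
move=> ha hb; elim: a ha => [|y a IH] /=.
  rewrite des_cons; case: b hb => [|z b] /=; first by rewrite ltnn.
  by case/andP=> xz _; rewrite ltnNge (ltnW xz) /= addn0.
case/andP=> xy ha; rewrite !des_cons IH //.
case: a {IH ha} => [|z a] /=; first by rewrite xy ltnn /=; lia.
lia.
Qed.

Definition alt b (l : seq nat) := all (fun i => if odd (b + i) then nth 0 l i < nth 0 l i.+1
   else nth 0 l i.+1 < nth 0 l i) (iota 0 (size l).-1).

Lemma downup_alt l : downup_seq l = alt 0 l.
Proof. by apply: eq_all => i; rewrite add0n. Qed.

Lemma alt_cons b y l : alt b (y :: l) =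
  (if l is z :: _ then (if odd b then y < z else z < y) else true) && alt b.+1 l.
Proof.
case: l => [|z l] //=; rewrite /alt /= iota1S all_map addn0; congr andb.
by apply: eq_all => i /=; rewrite addnS.
Qed.

Lemma alt_odd b c l : odd b = odd c -> alt b l = alt c l.
Proof. by move=> h; apply: eq_all => i; rewrite !oddD h. Qed.

Lemma alt_cat b x a l : all (fun z => x < z) a -> all (fun z => x < z) l ->
  alt b (a ++ x :: l) =
  [&& alt b a, (a ++ l == [::]) || odd (b + size a) & alt (b + size a).+1 l].
Proof.
move=> ha hl; elim: a b ha => [|y a IH] b /=.
  rewrite alt_cons addn0; case: l hl => [|z l] /=; first by rewrite /alt.
  case/andP=> xz _; rewrite xz ltnNge (ltnW xz) /=; by case: (odd b).
case/andP=> xy ha; rewrite !alt_cons IH // addSn addnS.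
case: a {IH ha} => [|z a] /=.
  rewrite xy ltnNge (ltnW xy) /= addn0 /alt /=; case: (odd b); case: l {hl} => //=.
by rewrite andbA.
Qed.

Section Inv.
Variables (g : nat -> nat) (l : seq nat).
Hypothesis hg : {in l &, forall u v, (g u < g v) = (u < v)}.

Lemma nth_map_lt i j : i < size l -> j < size l ->
  (nth 0 (map g l) i < nth 0 (map g l) j) = (nth 0 l i < nth 0 l j).
Proof. by move=> hi hj; rewrite !(nth_map 0) // hg // mem_nth. Qed.

Lemma des_map : des_seq (map g l) = des_seq l.
Proof.
rewrite /des_seq size_map; apply: eq_in_count => i; rewrite mem_iota /= add0n => hi.
by rewrite nth_map_lt //; case: (size l) hi => //= n hi; lia.
Qed.

Lemma lrmin_map : lrmin_seq (map g l) = lrmin_seq l.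
Proof.
rewrite /lrmin_seq size_map; apply: eq_in_count => i; rewrite mem_iota /= add0n => hi.
apply: eq_in_all => j; rewrite mem_iota /= add0n => hj.
by rewrite nth_map_lt // (ltn_trans hj hi).
Qed.

Lemma rlmin_map : rlmin_seq (map g l) = rlmin_seq l.
Proof.
rewrite /rlmin_seq size_map; apply: eq_in_count => i; rewrite mem_iota /= add0n => hi.
apply: eq_in_all => j; rewrite mem_iota => /andP[h1 h2].
rewrite nth_map_lt //; lia.
Qed.

Lemma alt_map b : alt b (map g l) = alt b l.
Proof.
rewrite /alt size_map; apply: eq_in_all => i; rewrite mem_iota /= add0n => hi.
have h1 : i < size l by case: (size l) hi => //= n hi; lia.
have h2 : i.+1 < size l by case: (size l) hi => //= n hi; lia.
by rewrite !nth_map_lt.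
Qed.
End Inv.

Definition ins j (x : nat) (t : seq nat) := take j t ++ x :: drop j t.

Lemma index_ins j x t : x \notin t -> j <= size t -> index x (ins j x t) = j.
Proof.
move=> xt jt; rewrite /ins index_cat.
have -> : (x \in take j t) = false by apply: negbTE; apply: contra xt; apply: mem_take.
by rewrite /= eqxx addn0 size_takel.
Qed.

Lemma ins_inj j x t1 t2 : j <= size t1 -> j <= size t2 -> ins j x t1 = ins j x t2 -> t1 = t2.
Proof.
move=> h1 h2 e.
have e1 := congr1 (take j) e; have e2 := congr1 (drop j) e.
rewrite /ins !take_size_cat ?size_takel // in e1.
rewrite /ins !drop_size_cat ?size_takel // in e2; case: e2 => e2.
by rewrite -(cat_take_drop j t1) -(cat_take_drop j t2) e1 e2.
Qed.

Lemma perms_cons_ins x s : x \notin s ->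
  perm_eq (permutations (x :: s))
    [seq ins j x t | t <- permutations s, j <- iota 0 (size s).+1].
Proof.
move=> xs; apply: uniq_perm; first exact: permutations_uniq.
  apply: allpairs_uniq_dep; first exact: permutations_uniq.
    by move=> t _; apply: iota_uniq.
  move=> [t1 j1] [t2 j2] /allpairsPdep[t1' [j1' [h1 hj1 [-> ->]]]].
  move=> /allpairsPdep[t2' [j2' [h2 hj2 [-> ->]]]] /= e.
  rewrite mem_permutations in h1; rewrite mem_permutations in h2.
  rewrite mem_iota /= add0n ltnS -(perm_size h1) in hj1.
  rewrite mem_iota /= add0n ltnS -(perm_size h2) in hj2.
  have x1 : x \notin t1' by rewrite (perm_mem h1).
  have x2 : x \notin t2' by rewrite (perm_mem h2).
  have ej : j1' = j2' by rewrite -(index_ins x1 hj1) e index_ins.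
  by move: e; rewrite ej => /ins_inj -> //; rewrite -ej.
move=> t; rewrite mem_permutations; apply/idP/allpairsPdep.
  move=> pt; have xt : x \in t by rewrite (perm_mem pt) mem_head.
  set j := index x t; exists (take j t ++ drop j.+1 t), j.
  have jt : j < size t by rewrite index_mem.
  have et : t = take j t ++ x :: drop j.+1 t.
    by rewrite -{1}(cat_take_drop j t) (drop_nth 0 jt) nth_index.
  have pt' : perm_eq t (x :: (take j t ++ drop j.+1 t)).
    by rewrite {1}et -cat1s perm_catCA.
  split.
  - by rewrite mem_permutations -(perm_cons x) -(permPl pt').
  - rewrite mem_iota /= add0n ltnS -ltnS -[(size s).+1]/(size (x :: s)) -(perm_size pt).
    exact: jt.
  - rewrite /ins take_size_cat ?size_takel ?drop_size_cat ?size_takel //; exact: ltnW.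
case=> t' [j [h _ ->]]; rewrite mem_permutations in h.
rewrite /ins -cat1s perm_catCA /= perm_cons cat_take_drop //.
Qed.

Lemma ins0 a l : ins 0 a l = a :: l.
Proof. by rewrite /ins take0 drop0. Qed.
Lemma ins_cons j a y l : ins j.+1 a (y :: l) = y :: ins j a l.
Proof. by []. Qed.

Lemma take_ins_lt j i a l : (j < i)%N -> (j <= size l)%N ->
  take i (ins j a l) = ins j a (take i.-1 l) /\ drop i (ins j a l) = drop i.-1 l.
Proof.
elim: l i j => [|y l IH] [|i] [|j] //=; rewrite ?ins0 //.
move=> ji jl; case: i ji => [|i] ji //.
rewrite ins_cons /=; have [-> ->] := IH i.+1 j ji jl; by [].
Qed.

Lemma take_ins_ge j i a l : (i <= j)%N -> (j <= size l)%N ->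
  take i (ins j a l) = take i l /\ drop i (ins j a l) = ins (j - i) a (drop i l).
Proof.
elim: l i j => [|y l IH] [|i] [|j] //=; rewrite ?ins0 ?subn0 ?take0 ?drop0 //.
move=> ij jl; rewrite subSS; have [<- <-] := IH i j ij jl; by []. Qed.


Local Open Scope ring_scope.

Section Conv.
Variable R : numFieldType.
Implicit Types u v w : nat -> R.

Definition conv u v n : R := \sum_(k < n.+1) (u k * v (n - k)%N) *+ 'C(n, k).
Definition Dsh u := fun k => u k.+1.

Lemma conv_eq u u' v v' n : (forall k, (k <= n)%N -> u k = u' k) ->
  (forall k, (k <= n)%N -> v k = v' k) -> conv u v n = conv u' v' n.
Proof.
move=> hu hv; apply: eq_bigr => k _; rewrite hu ?hv // ?leq_subr //.
by rewrite -ltnS ltn_ord.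
Qed.

Lemma conv_S u v n : conv u v n.+1 = conv (Dsh u) v n + conv u (Dsh v) n.
Proof.
rewrite /conv big_ord_recl /= subn0 bin0 mulr1n.
under eq_bigr => k _ do rewrite /bump /= add1n subSS binS mulrnDr.
rewrite big_split /= [X in _ + X]addrC addrCA; congr (_ + _).
rewrite [in RHS]big_ord_recl /= subn0 bin0 mulr1n /Dsh; congr (_ + _).
rewrite big_ord_recr /= bin_small // mulr0n addr0.
apply: eq_bigr => k _; rewrite /bump /= add1n -subSn //.
Qed.

Lemma conv0 u v : conv u v 0 = u 0%N * v 0%N.
Proof. by rewrite /conv big_ord1 /= bin0 mulr1n. Qed.

Lemma convDl u1 u2 v n : conv (fun k => u1 k + u2 k) v n = conv u1 v n + conv u2 v n.
Proof. by rewrite /conv -big_split /=; apply: eq_bigr => k _; rewrite mulrDl mulrnDl. Qed.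

Lemma convDr u v1 v2 n : conv u (fun k => v1 k + v2 k) n = conv u v1 n + conv u v2 n.
Proof. by rewrite /conv -big_split /=; apply: eq_bigr => k _; rewrite mulrDr mulrnDl. Qed.

Lemma convZl c u v n : conv (fun k => c * u k) v n = c * conv u v n.
Proof. by rewrite /conv mulr_sumr; apply: eq_bigr => k _; rewrite mulrnAr mulrA. Qed.

Lemma convZr c u v n : conv u (fun k => c * v k) n = c * conv u v n.
Proof.
rewrite /conv mulr_sumr; apply: eq_bigr => k _; rewrite mulrnAr; congr (_ *+ _).
by rewrite mulrCA.
Qed.

Lemma convC u v n : conv u v n = conv v u n.
Proof.
elim: n u v => [|n IH] u v; first by rewrite !conv0 mulrC.
by rewrite !conv_S IH addrC IH.
Qed.

Lemma convA u v w n : conv (conv u v) w n = conv u (conv v w) n.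
Proof.
elim: n u v w => [|n IH] u v w; first by rewrite !conv0 mulrA.
rewrite !conv_S.
rewrite (@conv_eq (Dsh (conv u v)) (fun k => conv (Dsh u) v k + conv u (Dsh v) k) w w);
  [|by move=> k _; rewrite /Dsh conv_S|by []].
rewrite convDl !IH.
rewrite [conv u (Dsh (conv v w)) n](@conv_eq u u _ (fun k => conv (Dsh v) w k + conv v (Dsh w) k));
  [|by []|by move=> k _; rewrite /Dsh conv_S].
by rewrite convDr addrA.
Qed.

Definition delta (k : nat) : R := (k == 0%N)%:R.

Lemma conv_deltal v n : conv delta v n = v n.
Proof.
rewrite /conv big_ord_recl /= subn0 bin0 mulr1n /delta /= mul1r big1 ?addr0 //.
by move=> k _; rewrite mul0r mul0rn.
Qed.

Lemma conv_deltar v n : conv v delta n = v n.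
Proof. by rewrite convC conv_deltal. Qed.

End Conv.

Lemma perm_ins j x t : perm_eq (ins j x t) (x :: t).
Proof. by rewrite /ins -cat1s perm_catCA /= cat_take_drop. Qed.

Lemma ins_map j x y (h : nat -> nat) t : h y = x -> ins j x (map h t) = map h (ins j y t).
Proof. by move=> hy; rewrite /ins map_cat /= map_take map_drop hy. Qed.

Lemma perms_map_addn c s : perm_eq (permutations (map (addn c) s))
   (map (map (addn c)) (permutations s)).
Proof.
apply: uniq_perm; first exact: permutations_uniq.
  rewrite map_inj_uniq ?permutations_uniq //; apply: inj_map; exact: addnI.
move=> t; rewrite mem_permutations; apply/idP/mapP.
  move=> pt.
  have ht : map (addn c \o subn^~ c) t = t.
    rewrite -[RHS]map_id; apply/eq_in_map => u ut /=.
    have := ut; rewrite (perm_mem pt) => /mapP[w _ ->]; by rewrite addKn.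
  exists (map (subn^~ c) t); last by rewrite -map_comp ht.
  rewrite mem_permutations; apply: (perm_map_inj (@addnI c)).
  by rewrite -map_comp ht.
by case=> t' pt' ->; apply: perm_map; rewrite -mem_permutations.
Qed.

Section Sums.
Variable R : numFieldType.
Implicit Types (f phi psi : seq nat -> R).

Definition SP f k := \sum_(t <- permutations (iota 0 k)) f t.

Definition invar f := forall (g : nat -> nat) l,
  {in l &, forall u v, (g u < g v)%N = (u < v)%N} -> f (map g l) = f l.

Lemma sum_ins x s F : x \notin s ->
  \sum_(t <- permutations (x :: s)) (F t : R) =
  \sum_(t <- permutations s) \sum_(j <- iota 0 (size s).+1) F (ins j x t).
Proof. by move=> xs; rewrite (perm_big _ (perms_cons_ins xs)) big_allpairs_dep. Qed.

Lemma sum_shift c k F : \sum_(t <- permutations (iota c k)) (F t : R) =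
  \sum_(t <- permutations (iota 0 k)) F (map (addn c) t).
Proof.
by rewrite -[c in iota c]addn0 iotaDl (perm_big _ (perms_map_addn _ _)) big_map.
Qed.

Lemma SP_shift f c k : invar f -> \sum_(t <- permutations (iota c k)) f t = SP f k.
Proof.
move=> hf; rewrite sum_shift; apply: eq_bigr => t _; apply: hf => u v _ _.
by rewrite ltn_add2l.
Qed.

Lemma mem_perms_iota a n l u : l \in permutations (iota a n) -> u \in l -> (a <= u)%N.
Proof. by rewrite mem_permutations => pl; rewrite (perm_mem pl) mem_iota => /andP[]. Qed.

Lemma size_perms_iota a n l : l \in permutations (iota a n) -> size l = n.
Proof. by rewrite mem_permutations => /perm_size ->; rewrite size_iota. Qed.

End Sums.
Section T.
Variable R : numFieldType.
Implicit Types (f phi psi : seq nat -> R).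

Definition plus phi (al : seq nat) : R :=
  \sum_(j <- iota 0 (size al).+1) phi (ins j 0 (map S al)).

Lemma inv_ins phi j a al : invar phi -> all (fun z => a < z)%N al ->
  phi (ins j a al) = phi (ins j 0 (map S al)).
Proof.
move=> hphi hal; pose h v := if v == a then 0%N else v.+1.
have -> : map S al = map h al.
  apply/eq_in_map => u ua; rewrite /h; case: eqP => // eua.
  by move/allP: hal => /(_ u ua); rewrite eua ltnn.
rewrite (ins_map j (y := a)) /h ?eqxx //; apply/esym/hphi => u v.
rewrite !(perm_mem (perm_ins j a al)) !inE => hu hv.
have ha : forall w, w \in al -> (a < w)%N by move=> w; move/allP: hal; apply.
case: (eqVneq u a) hu => [-> _|ua /= hu]; case: (eqVneq v a) hv => [-> _|va /= hv].
- by rewrite !ltnn.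
- by rewrite ha.
- by rewrite [RHS]ltnNge (ltnW (ha _ hu)).
- by rewrite ltnS.
Qed.

Lemma inv_plus phi : invar phi -> invar (plus phi).
Proof.
move=> hphi g l hg; rewrite /plus size_map; apply: eq_bigr => j _.
pose g' v := if v is w.+1 then (g w).+1 else 0%N.
have -> : map S (map g l) = map g' (map S l) by rewrite -!map_comp.
rewrite (ins_map j (y := 0%N)) //; apply: hphi => u v.
rewrite !(perm_mem (perm_ins j 0 (map S l))) !inE.
case: u => [|u]; case: v => [|v] //=; rewrite !ltnS => hu hv.
by apply: hg; rewrite -(mem_map succn_inj).
Qed.

Lemma SP_plus phi k : SP (plus phi) k = SP phi k.+1.
Proof.
rewrite /SP [iota 0 k.+1]/= sum_ins; last by rewrite mem_iota ltnn.
rewrite (sum_shift 1 k) size_iota !big_seq; apply: eq_bigr => t ht.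
rewrite /plus (size_perms_iota ht); apply: eq_bigr => j _.
congr phi; congr ins; apply: eq_map => u; by rewrite add1n.
Qed.

Lemma split_l phi psi a n i l : invar phi -> invar psi -> (i <= n.+1)%N -> size l = n ->
  all (fun z => a < z)%N l ->
  \sum_(j <- iota 0 n.+1) phi (take i (ins j a l)) * psi (drop i (ins j a l)) =
  (if i is i'.+1 then plus phi (take i' l) * psi (drop i' l) else 0) +
  (if (i <= n)%N then phi (take i l) * plus psi (drop i l) else 0).
Proof.
move=> hphi hpsi hi hl al.
rewrite -{1}(subnKC hi) iotaD big_cat /= add0n; congr (_ + _).
  case: i hi => [|i] hi; first by rewrite big_nil.
  rewrite /plus size_takel ?hl // mulr_suml; apply: eq_big_seq => j.
  rewrite mem_iota /= add0n => ji.
  have jl : (j <= size l)%N by rewrite hl; lia.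
  have [-> ->] := take_ins_lt a ji jl.
  rewrite inv_ins //; apply/allP => z /mem_take; move/allP: al; apply.
rewrite -[i in iota i]addn0 iotaDl big_map.
case: leqP => hin; last first.
  have -> : (n.+1 - i = 0)%N by lia.
  by rewrite big_nil.
rewrite /plus size_drop hl -subSn // mulr_sumr; apply: eq_big_seq => j.
rewrite mem_iota /= add0n => jn.
have jl : (i + j <= size l)%N by rewrite hl; lia.
have [-> ->] := take_ins_ge a (leq_addr j i) jl.
rewrite addKn inv_ins //; apply/allP => z /mem_drop; move/allP: al; apply.
Qed.
End T.

Section T2.
Variable R : numFieldType.
Implicit Types (f phi psi : seq nat -> R).

Lemma all_perms_iota a n l : l \in permutations (iota a n) -> all (fun z => a <= z)%N l.
Proof. by move=> hl; apply/allP => u; apply: mem_perms_iota hl. Qed.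

Lemma Tlem n : forall phi psi a i, invar phi -> invar psi -> (i <= n)%N ->
  \sum_(l <- permutations (iota a n)) phi (take i l) * psi (drop i l) =
  (SP phi i * SP psi (n - i)) *+ 'C(n, i).
Proof.
elim: n => [|n IH] phi psi a i hphi hpsi hi.
  case: i hi => // _; rewrite /SP /= !big_seq1 mulr1n //.
rewrite [iota a n.+1]/= sum_ins; last by rewrite mem_iota ltnn.
rewrite size_iota.
rewrite (eq_big_seq (fun l => (if i is i'.+1 then plus phi (take i' l) * psi (drop i' l) else 0) +
  (if (i <= n)%N then phi (take i l) * plus psi (drop i l) else 0))); last first.
  move=> l hl; apply: split_l => //; first exact: size_perms_iota hl.
  exact: all_perms_iota hl.
rewrite big_split /=.
case: i hi => [|i] hi.
  rewrite big1 // add0r leq0n IH //; last exact: inv_plus.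
  by rewrite SP_plus !subn0 !bin0.
rewrite IH //; last exact: inv_plus.
rewrite SP_plus subSS.
case: (leqP i.+1 n) => hin.
  rewrite IH //; last exact: inv_plus.
  by rewrite SP_plus -subSn // binS -mulrnDr addnC.
have ein : i = n by lia.
rewrite big1 ?addr0 ?ein ?subnn ?binn ?bin_small //.
Qed.

Lemma DEC f phi psi n : invar phi -> invar psi ->
  (forall al be, all (fun z => 0 < z)%N al -> all (fun z => 0 < z)%N be ->
     (size al + size be)%N = n -> f (al ++ 0%N :: be) = phi al * psi be) ->
  SP f n.+1 = conv (SP phi) (SP psi) n.
Proof.
move=> hphi hpsi hf.
rewrite /SP [iota 0 n.+1]/= sum_ins; last by rewrite mem_iota.
rewrite size_iota.
rewrite (eq_big_seq (fun l => \sum_(j <- iota 0 n.+1) phi (take j l) * psi (drop j l))); last first.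
  move=> l hl; apply: eq_bigr => j _; rewrite /ins hf //.
  - by apply/allP => z /mem_take; move/allP: (all_perms_iota hl); apply.
  - by apply/allP => z /mem_drop; move/allP: (all_perms_iota hl); apply.
  - by rewrite -size_cat cat_take_drop (size_perms_iota hl).
rewrite exchange_big /conv -(big_mkord xpredT (fun k => (SP phi k * SP psi (n - k)%N) *+ 'C(n, k))).
rewrite /index_iota subn0; apply: eq_big_seq => j; rewrite mem_iota /= add0n ltnS => jn.
exact: Tlem.
Qed.
End T2.

Section Spec.
Variable R : numFieldType.

Definition phP (x : R) t := (-1) ^+ (des_seq t + (t != [::])) * x ^+ lrmin_seq t.
Definition psG (x : R) t := (-1) ^+ des_seq t * x ^+ rlmin_seq t.
Definition phA t : R := (-1) ^+ des_seq t.
Definition phH t : R := (-1) ^+ (des_seq t + (t != [::])).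
Definition phE t : R := (odd (size t) && downup_seq t)%:R.
Definition psD (b : R) t := (downup_seq t)%:R * b ^+ rlmin_seq t.
Definition Lf (x : R) t := (-1) ^+ des_seq t * x ^+ (lrmin_seq t + rlmin_seq t - 2).

Lemma map_nil_eq (g : nat -> nat) (t : seq nat) : (map g t != [::]) = (t != [::]).
Proof. by case: t. Qed.

Lemma inv_phP x : invar (phP x).
Proof. by move=> g l hg; rewrite /phP des_map // lrmin_map // map_nil_eq. Qed.
Lemma inv_psG x : invar (psG x).
Proof. by move=> g l hg; rewrite /psG des_map // rlmin_map. Qed.
Lemma inv_phA : invar phA.
Proof. by move=> g l hg; rewrite /phA des_map. Qed.
Lemma inv_phH : invar phH.
Proof. by move=> g l hg; rewrite /phH des_map // map_nil_eq. Qed.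
Lemma inv_phE : invar phE.
Proof. by move=> g l hg; rewrite /phE size_map !downup_alt alt_map. Qed.
Lemma inv_psD b : invar (psD b).
Proof. by move=> g l hg; rewrite /psD !downup_alt alt_map // rlmin_map. Qed.
Lemma inv_scale c f : invar f -> invar (fun t => c * (f t : R)).
Proof. by move=> hf g l hg; rewrite hf. Qed.

Lemma SP_scale c f k : SP (fun t => c * (f t : R)) k = c * SP f k.
Proof. by rewrite /SP mulr_sumr. Qed.

Lemma cat_nil0 (al be : seq nat) : (al ++ 0%N :: be != [::]) = true.
Proof. by case: al. Qed.

Lemma recL x n : SP (Lf x) n.+1 = conv (SP (phP x)) (SP (psG x)) n.
Proof.
apply: DEC; [exact: inv_phP|exact: inv_psG|] => al be ha hb _.
rewrite /Lf /phP /psG des_cat // lrmin_cat // rlmin_cat //.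
have -> : ((lrmin_seq al).+1 + (rlmin_seq be).+1 - 2 = lrmin_seq al + rlmin_seq be)%N by lia.
rewrite !exprD; ring.
Qed.

Lemma recP x k : SP (phP x) k.+1 = - x * conv (SP (phP x)) (SP phA) k.
Proof.
rewrite -convZl -(@conv_eq _ (SP (fun t => - x * phP x t)) _ (SP phA) (SP phA)); last by [].
  apply: DEC; [exact/inv_scale/inv_phP|exact: inv_phA|] => al be ha hb _.
  rewrite /phA /phP des_cat // lrmin_cat // cat_nil0 /= !exprD !exprS; ring.
by move=> j _; rewrite SP_scale.
Qed.

Lemma recG x m : SP (psG x) m.+1 = x * conv (SP phH) (SP (psG x)) m.
Proof.
rewrite -convZr -(@conv_eq _ (SP phH) _ (SP (fun t => x * psG x t))); [|by []|].
  apply: DEC; [exact: inv_phH|exact/inv_scale/inv_psG|] => al be ha hb _.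
  rewrite /phH /psG des_cat // rlmin_cat // !exprD !exprS; ring.
by move=> j _; rewrite SP_scale.
Qed.

Lemma recA m : SP phA m.+1 = conv (SP phH) (SP phA) m.
Proof.
apply: DEC; [exact: inv_phH|exact: inv_phA|] => al be ha hb _.
rewrite /phH /phA des_cat // !exprD; ring.
Qed.

Lemma recD b n : (0 < n)%N -> SP (psD b) n.+1 = b * conv (SP phE) (SP (psD b)) n.
Proof.
move=> n0; rewrite -convZr -(@conv_eq _ (SP phE) _ (SP (fun t => b * psD b t))); [|by []|].
  apply: DEC; [exact: inv_phE|exact/inv_scale/inv_psD|] => al be ha hb hs.
  rewrite /phE /psD rlmin_cat // !downup_alt alt_cat // add0n.
  have -> : (al ++ be == [::]) = false by apply/negbTE; rewrite -size_eq0 size_cat hs -lt0n.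
  case ho: (odd (size al)) => /=; last by rewrite andbF !mul0r.
  rewrite (@alt_odd (size al).+1 0 be); last by rewrite /= ho.
  rewrite exprS.
  by case: (alt 0 al); case: (alt 0 be); rewrite /= ?mul0r ?mulr0 ?mul1r ?mulr1.
by move=> j _; rewrite SP_scale.
Qed.

Lemma SP0 f : SP f 0 = f [::] :> R.
Proof. by rewrite /SP /= big_seq1. Qed.

Lemma SP1 f : SP f 1 = f [:: 0%N] :> R.
Proof. by rewrite /SP /= big_seq1. Qed.

Lemma SP_H j : SP phH j = if j == 0%N then 1 else - SP phA j.
Proof.
case: j => [|j]; first by rewrite SP0 /phH /= expr0.
rewrite /= /SP -sumrN; apply: eq_big_seq => t ht.
rewrite /phH /phA; have -> : (t != [::]) = true by rewrite -size_eq0 (size_perms_iota ht).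
by rewrite addn1 exprS mulN1r.
Qed.

Lemma SP_E j : SP phE j = (odd j)%:R * SP (psD 1) j.
Proof.
rewrite /SP mulr_sumr; apply: eq_big_seq => t ht.
rewrite /phE /psD (size_perms_iota ht) expr1n mulr1.
by case: (odd j); case: (downup_seq t); rewrite /= ?mul0r ?mul1r.
Qed.
End Spec.

Lemma half_odd_odd i m : odd i -> odd m -> ((i + m).+1)./2 = (i./2 + m./2).+1.
Proof.
move=> hi hm; rewrite -{1}(odd_double_half i) -{1}(odd_double_half m) hi hm.
have -> : ((true + (i./2).*2) + (true + (m./2).*2)).+1 = (true + (i./2 + m./2).+1.*2)%N.
  rewrite -!muln2 /=; lia.
by rewrite half_bit_double.
Qed.

Lemma half_odd_even i m : odd i -> ~~ odd m -> (i + m)./2 = (i./2 + m./2)%N.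
Proof. by move=> hi hm; rewrite halfD hi (negbTE hm). Qed.

Section Alg.
Variable R : numFieldType.
Variable b : R.
Let x : R := b / 2.

Let A k := SP (@phA R) k.
Let H k := SP (@phH R) k.
Let P k := SP (phP x) k.
Let G k := SP (psG x) k.
Let L n := SP (Lf x) n.+1.
Let E k := SP (@phE R) k.
Let D k := SP (psD b) k.
Let E1 k := SP (psD (1 : R)) k.
Let T k := A k - delta R k.
Let tau k := (-1) ^+ k./2 * E k.
Let Q n := if odd n then 0 else (-1) ^+ n./2 * D n.

Lemma A0 : A 0 = 1.
Proof. by rewrite /A SP0 /phA expr0. Qed.

Lemma H_eq k : H k = delta R k + (-1) * T k.
Proof.
rewrite /H SP_H /T /delta; case: k => [|k] /=; first by rewrite -/(A 0) A0; ring.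
rewrite -/(A k.+1); ring.
Qed.

Lemma A_eq k : A k = delta R k + T k.
Proof. rewrite /T; ring. Qed.

Lemma L_rec n : L n.+1 = - (2 * x) * conv T L n.
Proof.
rewrite /L recL conv_S.
have e1 : conv (Dsh P) G n = - x * conv A L n.
  rewrite (@conv_eq _ (Dsh P) (fun k => - x * conv P A k) G G) //; last by move=> k _; rewrite /Dsh /P recP.
  rewrite convZl (@conv_eq _ _ (conv A P) G G) //; last by move=> k _; rewrite convC.
  by rewrite convA (@conv_eq _ A A (conv P G) L) // => k _; rewrite /L recL.
have e2 : conv P (Dsh G) n = x * conv H L n.
  rewrite (@conv_eq _ P P (Dsh G) (fun k => x * conv H G k)) //; last by move=> k _; rewrite /Dsh /G recG.
  rewrite convZr -convA (@conv_eq _ _ (conv H P) G G) //; last by move=> k _; rewrite convC.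
  by rewrite convA (@conv_eq _ H H (conv P G) L) // => k _; rewrite /L recL.
rewrite -/P -/G e1 e2.
rewrite (@conv_eq _ H (fun k => delta R k + (-1) * T k) L L) //; last by move=> k _; rewrite H_eq.
rewrite (convDl (delta R) (fun k => (-1) * T k) L n) (convZl (-1) T L n).
rewrite (@conv_eq _ A (fun k => delta R k + T k) L L) //; last by move=> k _; rewrite A_eq.
rewrite (convDl (delta R) T L n).
ring.
Qed.

Lemma T_rec k : T k.+1 = delta R k - conv T T k.
Proof.
have -> : T k.+1 = A k.+1 by rewrite /T /delta /= subr0.
rewrite /A recA -/A.
rewrite (@conv_eq _ _ (fun k => delta R k + (-1) * T k) A (fun k => delta R k + T k)); last first.
- by move=> j _; rewrite A_eq.
- by move=> j _; rewrite -H_eq.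
rewrite (convDl (delta R) (fun k => (-1) * T k)) (convZl (-1) T).
rewrite (convDr (delta R) (delta R) T) (convDr T (delta R) T).
rewrite conv_deltal conv_deltal conv_deltar.
ring.
Qed.
Lemma E0 : E 0 = 0.
Proof. by rewrite /E SP0 /phE. Qed.

Lemma E_odd k : E k = (odd k)%:R * E1 k.
Proof. exact: SP_E. Qed.

Lemma E_rec k : E k.+1 = conv E E k + delta R k.
Proof.
case: k => [|k].
  by rewrite conv0 E0 /E SP1 /phE /delta /= mul0r add0r.
rewrite /delta /= addr0 /E SP_E recD // mul1r mulr_sumr /conv.
apply: eq_bigr => i _; rewrite mulrnAr; congr (_ *+ _).
have hi : (i <= k.+1)%N by rewrite -ltnS ltn_ord.
rewrite !SP_E.
have key : (odd i)%:R * (odd k.+2)%:R = (odd i)%:R * (odd (k.+1 - i))%:R :> R.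
  case hoi : (odd i); last by rewrite !mul0r.
  by rewrite oddB // hoi /= addbT.
set e1 := SP (psD 1) i; set e2 := SP (psD 1) (k.+1 - i).
transitivity (((odd i)%:R * (odd k.+2)%:R) * (e1 * e2)); first ring.
rewrite key; ring.
Qed.

Lemma tau0 : tau 0 = 0.
Proof. by rewrite /tau E0 mulr0. Qed.

Lemma tau_rec k : tau k.+1 = delta R k - conv tau tau k.
Proof.
have hc : conv tau tau k = - ((-1) ^+ (k.+1)./2 * conv E E k).
  rewrite /conv mulr_sumr -sumrN; apply: eq_bigr => i _.
  rewrite mulrnAr -mulNrn; congr (_ *+ _).
  have hi : (i <= k)%N by rewrite -ltnS ltn_ord.
  rewrite /tau /E !SP_E -/E1.
  case hoi : (odd i); last by rewrite !(mul0r, mulr0, oppr0).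
  case hom : (odd (k - i)); last by rewrite !(mul0r, mulr0, oppr0).
  have -> : (k.+1)./2 = (i./2 + (k - i)./2).+1 by rewrite -half_odd_odd // subnKC.
  rewrite exprS exprD; ring.
rewrite hc opprK addrC /tau E_rec mulrDr; congr (_ + _).
by case: k {hc} => [|k]; rewrite /delta /= ?mulr0 // expr0 mul1r.
Qed.

Lemma T_tau n : forall k, (k <= n)%N -> T k = tau k.
Proof.
elim: n => [|n IH] k hk.
  have -> : k = 0%N by lia.
  by rewrite tau0 /T A0 /delta /= subrr.
case: (leqP k n) => hkn; first exact: IH.
have -> : k = n.+1 by lia.
rewrite T_rec tau_rec; congr (_ - _); exact: conv_eq.
Qed.

Lemma Q_rec n : Q n.+1 = - b * conv tau Q n.
Proof.
case: n => [|n]; first by rewrite conv0 tau0 /Q /= mul0r mulr0.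
have hc : conv tau Q n.+1 = (odd n.+1)%:R * (-1) ^+ (n.+1)./2 * conv E D n.+1.
  rewrite /conv mulr_sumr; apply: eq_bigr => i _; rewrite mulrnAr; congr (_ *+ _).
  have hi : (i <= n.+1)%N by rewrite -ltnS ltn_ord.
  rewrite /tau /Q /E !SP_E -/E1.
  case hoi : (odd i); last by rewrite !(mul0r, mulr0).
  rewrite oddB // hoi addbT.
  case hon : (odd n.+1); last by rewrite /= !(mul0r, mulr0).
  rewrite /= mul1r.
  have -> : uphalf n = (i./2 + (n.+1 - i)./2)%N.
    rewrite -half_odd_even ?hoi //; first by rewrite subnKC.
    by rewrite oddB // hoi hon.
  rewrite exprD; ring.
rewrite hc /Q /D /E recD //.
have -> : odd n.+2 = ~~ odd n.+1 by [].
case hon : (odd n.+1) => /=; last by rewrite !(mul0r, mulr0).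
have ho : odd n = false by move: hon => /= /negbTE.
rewrite uphalf_half ho add0n exprS; ring.
Qed.

Lemma L_Q n : L n = Q n.
Proof.
elim/ltn_ind: n => -[|n] IH.
  rewrite /L /Q /D SP1 SP0 /Lf /psD /=.
  rewrite (_ : des_seq [:: 0%N] = 0%N) // (_ : lrmin_seq [:: 0%N] = 1%N) // (_ : rlmin_seq [:: 0%N] = 1%N) // (_ : rlmin_seq [::] = 0%N) //.
  by rewrite /= !expr0 !mul1r.
rewrite L_rec Q_rec.
rewrite (@conv_eq _ T tau L Q); first last.
- by move=> k hk; apply: IH; rewrite ltnS.
- by move=> k hk; apply: (T_tau hk).
have -> : 2 * x = b by rewrite /x mulrC divfK // pnatr_eq0.
by [].
Qed.
End Alg.

Lemma pword_inj m : injective (@pword m).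
Proof.
move=> s1 s2 h; apply/permP => i; apply: val_inj.
move: h; rewrite /pword => /eq_in_map /(_ i); apply.
by rewrite mem_enum.
Qed.

Lemma perm_pword m (s : 'S_m) : perm_eq (pword s) (iota 0 m).
Proof.
rewrite /pword -val_enum_ord (map_comp val s) ; apply: perm_map.
apply: uniq_perm; [by rewrite map_inj_uniq ?enum_uniq //; exact: perm_inj|exact: enum_uniq|].
move=> i; rewrite mem_enum inE; apply/mapP; exists (s^-1 i)%g; first by rewrite mem_enum.
by rewrite permKV.
Qed.

Lemma perms_pword m : perm_eq (map (@pword m) (index_enum {perm 'I_m}))
   (permutations (iota 0 m)).
Proof.
apply: uniq_perm; first by rewrite map_inj_uniq ?index_enum_uniq //; exact: pword_inj.
  exact: permutations_uniq.
move=> t; rewrite mem_permutations; apply/mapP/idP.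
  by case=> s _ ->; apply: perm_pword.
move=> pt.
have st : size t = m by rewrite (perm_size pt) size_iota.
have ht : forall i : 'I_m, (nth 0%N t i < m)%N.
  move=> i; have : nth 0%N t i \in iota 0 m by rewrite -(perm_mem pt) mem_nth // st.
  by rewrite mem_iota.
have ut : uniq t by rewrite (perm_uniq pt) iota_uniq.
pose f (i : 'I_m) : 'I_m := Ordinal (ht i).
have finj : injective f.
  move=> i j /(congr1 val); rewrite /f /= => e.
  apply: val_inj; apply/eqP; rewrite -(nth_uniq 0%N _ _ ut) ?st ?ltn_ord //; exact/eqP.
exists (perm finj); first by rewrite mem_index_enum.
apply: (@eq_from_nth _ 0%N); first by rewrite size_map size_enum_ord st.
move=> i; rewrite st => hi.
rewrite /pword (nth_map (Ordinal hi)) ?size_enum_ord //.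
have -> : nth (Ordinal hi) (enum 'I_m) i = Ordinal hi by exact: (nth_ord_enum (Ordinal hi) (Ordinal hi)).
by rewrite permE.
Qed.


Lemma sum_pword (R : numFieldType) m (F : seq nat -> R) :
  \sum_(s : 'S_m) F (pword s) = \sum_(t <- permutations (iota 0 m)) F t.
Proof. by rewrite -(perm_big _ (perms_pword m)) big_map. Qed.


End Aux.
Import Aux.
Local Open Scope ring_scope.

Theorem theorem1p12 (R : numFieldType) (beta : R) (n : nat) :
  (1 <= n)%N ->
  \sum_(s : 'S_n.+1)
     (-1) ^+ des s * (beta / 2) ^+ (LRmin s + RLmin s - 2)%N
  = if odd n then 0
    else (-1) ^+ (n./2) * \sum_(s : 'S_n | downup s) beta ^+ RLmin s.
Proof.
move=> _.
have -> : \sum_(s : 'S_n | downup s) beta ^+ RLmin s = \sum_(s : 'S_n) psD beta (pword s).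
  rewrite big_mkcond; apply: eq_bigr => s _; rewrite /psD /downup /RLmin.
  by case: (downup_seq (pword s)); rewrite ?mul1r ?mul0r.
transitivity (\sum_(s : 'S_n.+1) Lf (beta / 2) (pword s)); first by [].
rewrite !sum_pword.
exact: L_Q.
Qed.
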